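(* Let $p\ge1$, $m=2^p$, and inject two identical bosons in input modes $1$ and $2$ of the Sylvester interferometer $U_m=\frac{1}{\sqrt m}H(m)$. Among all $\frac12 m(m+1)$ two-particle output states $(i,j)$ with $1\le i\le j\le m$, the number of suppressed states is $m^2/4$, so the fraction of suppressed states is $\frac{1}{2}\cdot\frac{m}{m+1}$.
   Context: For $m=2^p$, the Sylvester matrix $H(m)$ is defined recursively by $H(1)=[1]$ and $H(2^p)=\begin{bmatrix}H(2^{p-1})&H(2^{p-1})\\ H(2^{p-1})&-H(2^{p-1})\end{bmatrix}$, rows and columns indexed $1,\dots,m$. An $n$-particle state on $m$ modes is a nondecreasing tuple $\vec t=(t_1\le\dots\le t_n)$ with $t_i\in\{1,\dots,m\}$; $\mu_k(\vec t)=|\{i:t_i=k\}|$. For input $\vec s$ and output $\vec t$, the scattering matrix is $S_{i,j}=U_{t_i,s_j}$; the bosonic amplitude is $\mathrm{perm}\,S/\sqrt{\prod_k\mu_k(\vec s)!\prod_k\mu_k(\vec t)!}$. An output state is suppressed if its amplitude is zero. *)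

(* Defs.v *)
From HB Require Import structures.
From mathcomp Require Import all_boot all_order all_algebra all_fingroup all_field.
Set Implicit Arguments. Unset Strict Implicit. Unset Printing Implicit Defensive.
Import Order.TTheory GRing.Theory Num.Theory.
Local Open Scope ring_scope.

Lemma sylv_dim (p : nat) : (2 ^ p + 2 ^ p = 2 ^ p.+1)%N.
Proof. by rewrite expnS mul2n addnn. Qed.

(* Sylvester matrix H(2^p), defined by the block recursion
   H(1) = [1], H(2^p) = [[H, H], [H, -H]] with H = H(2^(p-1)).
   Rows/columns are indexed 0..m-1 (paper: 1..m). *)
Fixpoint sylvester (p : nat) : 'M[algC]_(2 ^ p) :=
  match p with
  | 0 => 1%:M
  | p'.+1 =>
      castmx (sylv_dim p', sylv_dim p')
        (block_mx (sylvester p') (sylvester p') (sylvester p') (- sylvester p'))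
  end.

Definition sylvU (p : nat) : 'M[algC]_(2 ^ p) :=
  (sqrtC (2 ^ p)%:R)^-1 *: sylvester p.

Definition permanent (n : nat) (A : 'M[algC]_n) : algC :=
  \sum_(s : 'S_n) \prod_(i < n) A i (s i).

(* An n-particle state on m modes: a nondecreasing n-tuple of modes. *)
Definition is_state (m n : nat) (t : n.-tuple 'I_m) : bool :=
  sorted (fun a b : 'I_m => (a <= b)%N) t.

Definition occ (m n : nat) (t : n.-tuple 'I_m) (k : 'I_m) : nat := count_mem k t.

Definition scattering (m n : nat) (U : 'M[algC]_m) (s t : n.-tuple 'I_m) : 'M[algC]_n :=
  \matrix_(i < n, j < n) U (tnth t i) (tnth s j).

Definition amplitude (m n : nat) (U : 'M[algC]_m) (s t : n.-tuple 'I_m) : algC :=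
  permanent (scattering U s t) /
  sqrtC ((\prod_(k < m) (occ s k)`! * \prod_(k < m) (occ t k)`!)%N)%:R.

Definition suppressed (m n : nat) (U : 'M[algC]_m) (s t : n.-tuple 'I_m) : bool :=
  amplitude U s t == 0.

(* Main.v *)
Require Import Defs.
From HB Require Import structures.
From mathcomp Require Import all_boot all_order all_algebra all_fingroup all_field.
From mathcomp Require Import zify ring lra.
Import Order.TTheory GRing.Theory Num.Theory.
Local Open Scope ring_scope.

Lemma sylv_col0 p (i j : 'I_(2 ^ p)) : (j : nat) = 0%N -> sylvester p i j = 1.
Proof.
elim: p i j => [|p IH] i j hj.
  rewrite /= mxE; case: i j hj => [[|//] ?] [[|//] ?] _ /=; by [].
rewrite /= castmxE.
set i' := cast_ord _ i; set j' := cast_ord _ j.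
have hj' : (j' : nat) = 0%N by rewrite /= hj.
case: (splitP j') => [k hk|k hk]; last by have := expn_gt0 2 p; rewrite hk in hj'; lia.
have -> : j' = lshift _ k by apply: val_inj.
have hk0 : (k : nat) = 0%N by rewrite -hk.
case: (splitP i') => [l hl|l hl].
  have -> : i' = lshift _ l by apply: val_inj.
  by rewrite block_mxEul IH.
have -> : i' = rshift _ l by apply: val_inj.
by rewrite block_mxEdl IH.
Qed.

Lemma sylv_col1 p (i j : 'I_(2 ^ p.+1)) : (j : nat) = 1%N -> sylvester p.+1 i j = (-1) ^+ odd i.
Proof.
elim: p i j => [|p IH] i j hj.
  rewrite /= castmxE.
  set i' := cast_ord _ i; set j' := cast_ord _ j.
  have -> : j' = rshift 1 (0 : 'I_1) by apply: val_inj; rewrite /= hj.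
  case: (splitP i') => [l hl|l hl].
    have -> : i' = lshift _ l by apply: val_inj.
    rewrite block_mxEur mxE.
    have -> : (i : nat) = 0%N by rewrite -[nat_of_ord i]/(nat_of_ord i') hl; case: l {hl} => [[|]].
    by case: l {hl} => [[|]] //.
  have -> : i' = rshift _ l by apply: val_inj.
  rewrite block_mxEdr mxE.
  have -> : (i : nat) = 1%N by rewrite -[nat_of_ord i]/(nat_of_ord i') hl; case: l {hl} => [[|]].
  by rewrite !mxE; case: l {hl} => [[|]] //= _; rewrite expr1.
rewrite [sylvester p.+2]/= castmxE.
set i' := cast_ord _ i; set j' := cast_ord _ j.
have hj' : (j' : nat) = 1%N by rewrite /= hj.
have hp : (1 < 2 ^ p.+1)%N by rewrite -[1%N]/(2^0)%N ltn_exp2l.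
case: (splitP j') => [k hk|k hk]; last by rewrite hk in hj'; lia.
have -> : j' = lshift _ k by apply: val_inj.
have hk0 : (k : nat) = 1%N by rewrite -hk.
have ev : ~~ odd (2 ^ p.+1) by rewrite oddX.
case: (splitP i') => [l hl|l hl].
  have -> : i' = lshift _ l by apply: val_inj.
  by rewrite block_mxEul IH // -[nat_of_ord i]/(nat_of_ord i') hl.
have -> : i' = rshift _ l by apply: val_inj.
by rewrite block_mxEdl IH // -[nat_of_ord i]/(nat_of_ord i') hl oddD (negbTE ev).
Qed.
Lemma perm2 (A : 'M[algC]_2) : permanent A = A 0 0 * A 1 1 + A 0 1 * A 1 0.
Proof.
rewrite /permanent (bigD1 (1%g : 'S_2)) //= (bigD1 (tperm 0 1 : 'S_2)) //=; last first.
  by apply/eqP => /permP /(_ 0); rewrite perm1 tpermL.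
rewrite [X in _ + (_ + X)]big1 ?addr0; last first.
  move=> s /andP[h1 h2]; exfalso.
  have : s 0 != 0.
    apply: contra h1 => /eqP h0; apply/eqP/permP => i; rewrite perm1.
    case: i => [[|[|//]] hi].
      by rewrite (_ : Ordinal hi = 0) ?h0 //; apply: val_inj.
    have : s (Ordinal hi) != s 0 by rewrite (inj_eq perm_inj).
    rewrite h0; case: (s (Ordinal hi)) => [[|[|//]] ?] //= _; exact: val_inj.
  move=> hs0; move/negP: h2; apply; apply/eqP/permP => i.
  have hs0' : s 0 = 1 by apply/val_inj; move: hs0; case: (s 0) => [[|[|//]] ?].
  case: i => [[|[|//]] hi].
    by rewrite (_ : Ordinal hi = 0) ?tpermL //; apply: val_inj.
  rewrite (_ : Ordinal hi = 1); last by apply: val_inj.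
  rewrite tpermR; apply/val_inj.
  have : s 1 != s 0 by rewrite (inj_eq perm_inj).
  by rewrite hs0'; case: (s 1) => [[|[|//]] ?].
rewrite !big_ord_recr !big_ord0 /= !mul1r !perm1 !permE /=.
by congr (A _ _ * A _ _ + A _ _ * A _ _); apply: val_inj.
Qed.

Lemma supp_iff p (s : 2.-tuple 'I_(2 ^ p)) (i j : 'I_(2 ^ p)) : (0 < p)%N ->
  map val s = [:: 0%N; 1%N] ->
  suppressed (sylvU p) s [tuple i; j] = (odd i != odd j).
Proof.
case: p s i j => [//|q] s i j _ hs.
have hs0 : val (tnth s 0) = 0%N.
  by rewrite (tnth_nth (tnth s 0)) -(nth_map _ 0%N) ?size_tuple // hs.
have hs1 : val (tnth s 1) = 1%N.
  by rewrite (tnth_nth (tnth s 0)) -(nth_map _ 0%N) ?size_tuple // hs.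
have t0 : tnth [tuple i; j] 0 = i by [].
have t1 : tnth [tuple i; j] 1 = j by [].
rewrite /suppressed /amplitude perm2 !mxE t0 t1.
rewrite (sylv_col0 _ i _ hs0) (sylv_col0 _ j _ hs0) (sylv_col1 _ i _ hs1) (sylv_col1 _ j _ hs1).
set c := (sqrtC _)^-1; set d := sqrtC _.
have -> : c * 1 * (c * (-1) ^+ odd j) + c * (-1) ^+ odd i * (c * 1)
   = c ^+ 2 * ((-1) ^+ odd j + (-1) ^+ odd i) by ring.
have hc : c != 0 by rewrite invr_eq0 sqrtC_eq0 pnatr_eq0 expn_eq0.
have hd : d != 0.
  rewrite sqrtC_eq0 pnatr_eq0 -lt0n muln_gt0.
  by apply/andP; split; apply: prodn_gt0 => k; apply: fact_gt0.
rewrite mulf_eq0 invr_eq0 (negbTE hd) orbF mulf_eq0 expf_eq0 (negbTE hc) andbF /=.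
have h2 : (1 + 1 : algC) != 0 by rewrite -mulr2n pnatr_eq0.
case: (odd i); case: (odd j) => /=; rewrite ?expr1 ?expr0.
- by rewrite -opprD oppr_eq0 (negbTE h2).
- by rewrite subrr eqxx.
- by rewrite addrC subrr eqxx.
- by rewrite (negbTE h2).
Qed.
Local Close Scope ring_scope.

Lemma card_tuple2 m (Q : pred (2.-tuple 'I_m)) :
  #|[set t | Q t]| = \sum_(i < m) \sum_(j < m) Q [tuple i; j].
Proof.
rewrite cardsE -sum1_card big_mkcond /=.
rewrite (reindex (fun x : 'I_m * 'I_m => [tuple x.1; x.2])) /=; last first.
  exists (fun t : 2.-tuple 'I_m => (tnth t ord0, tnth t ord_max)) => [[a b]//|t _].
  case: t => [[|a [|b [|//]]] //] ht; exact: val_inj.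
rewrite pair_big /=; apply: eq_bigr => -[a b] _ /=.
by rewrite unfold_in; case: (Q _).
Qed.

Lemma sumA n : \sum_(0 <= i < n) odd i = n./2.
Proof.
elim: n => [|n IH]; first by rewrite big_geq.
by rewrite big_nat_recr //= IH uphalf_half addnC.
Qed.

Lemma sumB n : \sum_(0 <= i < n) ~~ odd i = uphalf n.
Proof.
elim: n => [|n IH]; first by rewrite big_geq.
rewrite big_nat_recr //= IH !uphalf_half /=; case: (odd n) => /=; lia.
Qed.

Lemma sumG n : \sum_(0 <= i < n) (odd i != odd n) = uphalf n.
Proof.
case h: (odd n).
  rewrite -sumB; apply: eq_bigr => i _; by case: (odd i).
rewrite uphalf_half h add0n -sumA; apply: eq_bigr => i _; by case: (odd i).
Qed.

Lemma sumT n : 2 * \sum_(0 <= i < n) \sum_(0 <= j < n) (i <= j) = n * n.+1.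
Proof.
elim: n => [|n IH]; first by rewrite big_geq.
have e : \sum_(0 <= i < n.+1) \sum_(0 <= j < n.+1) (i <= j)
  = \sum_(0 <= i < n) \sum_(0 <= j < n) (i <= j) + n.+1.
  rewrite (eq_bigr (fun i => \sum_(0 <= j < n) (i <= j) + (i <= n)));
    last by move=> i _; rewrite big_nat_recr.
  rewrite big_split /= big_nat_recr //=.
  rewrite (eq_big_nat _ _ (F1 := fun j => (n <= j) : nat) (F2 := fun _ => 0)); last by move=> j /andP[_ hj]; lia.
  rewrite (eq_big_nat _ _ (F1 := fun i => (i <= n) : nat) (F2 := fun _ => 1)); last by move=> j /andP[_ hj]; lia.
  by rewrite !sum_nat_const_nat; lia.
rewrite e; lia.
Qed.

Lemma sumF n : \sum_(0 <= i < n) \sum_(0 <= j < n) ((i <= j) && (odd i != odd j)) = n./2 * uphalf n.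
Proof.
elim: n => [|n IH]; first by rewrite big_geq.
rewrite (eq_bigr (fun i => \sum_(0 <= j < n) ((i <= j) && (odd i != odd j)) + ((i <= n) && (odd i != odd n))));
    last by move=> i _; rewrite big_nat_recr.
rewrite big_split /= big_nat_recr //= IH.
rewrite (eq_big_nat _ _ (F1 := fun j => ((n <= j) && (odd n != odd j)) : nat) (F2 := fun _ => 0)); last by move=> j /andP[_ hj]; case: leqP => //; lia.
rewrite big_nat_recr //= eqxx andbF addn0.
rewrite (eq_big_nat _ _ (F1 := fun i => ((i <= n) && (odd i != odd n)) : nat) (F2 := fun i => (odd i != odd n) : nat)); last by move=> j /andP[_ hj]; rewrite (ltnW hj).
rewrite sum_nat_const_nat sumG muln0 addn0 mulnS; lia.
Qed.

Lemma big2_nat m (F : nat -> nat -> nat) :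
  (\sum_(i < m) \sum_(j < m) F i j = \sum_(0 <= i < m) \sum_(0 <= j < m) F i j)%N.
Proof. rewrite big_mkord; apply: eq_bigr => i _; by rewrite big_mkord. Qed.

Theorem corollary1 (p : nat) (s : 2.-tuple 'I_(2 ^ p)) :
  (0 < p)%N ->
  map val s = [:: 0%N; 1%N] ->
  let m := (2 ^ p)%N in
  let states := [set t : 2.-tuple 'I_(2 ^ p) | is_state t] in
  let supp := [set t : 2.-tuple 'I_(2 ^ p) | is_state t && suppressed (sylvU p) s t] in
  [/\ #|states| = ((m * (m + 1)) %/ 2)%N,
      #|supp| = ((m ^ 2) %/ 4)%N
    & ((#|supp|%:R / #|states|%:R : rat) = (1 / 2) * (m%:R / (m + 1)%N%:R))%R].
Proof.
move=> hp hs m states supp.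
have hst : #|states| = (m * (m + 1) %/ 2)%N.
  rewrite /states (@card_tuple2 _ (fun t => is_state t)).
  rewrite (eq_bigr (fun i : 'I_m => \sum_(j < m) ((i : nat) <= j)%N)); last first.
    by move=> i _; apply: eq_bigr => j _; rewrite /is_state /= andbT.
  rewrite (big2_nat m (fun i j => ((i <= j)%N : nat))).
  by rewrite addn1 -(sumT m) mulKn.
have hsu : #|supp| = (m./2 * uphalf m)%N.
  rewrite /supp (@card_tuple2 _ (fun t => is_state t && suppressed (sylvU p) s t)).
  rewrite (eq_bigr (fun i : 'I_m => \sum_(j < m) (((i : nat) <= j) && (odd i != odd j))%N)); last first.
    by move=> i _; apply: eq_bigr => j _; rewrite /is_state supp_iff //= andbT.
  by rewrite (big2_nat m (fun i j => (((i <= j)%N && (odd i != odd j)) : nat))) sumF.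
have hm : m = (2 ^ p.-1).*2 by rewrite /m -mul2n -expnS prednK.
have hk : (0 < 2 ^ p.-1)%N by rewrite expn_gt0.
move: hst hsu; rewrite hm uphalf_double doubleK -!mul2n => -> ->.
set k := (2 ^ p.-1)%N in hk *.
have e1 : (2 * k * (2 * k + 1) %/ 2 = k * (2 * k + 1))%N by rewrite -mulnA mulKn.
have e2 : ((2 * k) ^ 2 %/ 4 = k * k)%N.
  by rewrite expnMn (_ : (2 ^ 2 = 4)%N) // mulKn // -(expnMn) mulnn.
rewrite e1 e2; split => //.
rewrite !natrM !natrD.
have hk' : (k%:R : rat) != 0%R by rewrite pnatr_eq0 -lt0n.
have hk2 : ((2 * k + 1)%N%:R : rat) != 0%R by rewrite pnatr_eq0 addn1 //.
move: hk2; rewrite natrD natrM => hk2.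
field; rewrite hk' andbT -natrD -[1%R]/(1%:R)%R -natrD pnatr_eq0 addn1 //.
Qed.
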